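(* Let $p\geq5$ be a prime, $q$ a power of $p$, $m\geq1$, and let $\mathcal{S}$ be the Sylow $p$-subgroup of $\mathrm{U}_{2m+1}(\mathbb{F}_q)$ consisting of its lower unitriangular matrices. Then $\mathfrak{X}(\mathcal{S})=\mathcal{S}$.
   Context: $\overline{x}=x^q$ on $\mathbb{F}_{q^2}$; $Q_{2m+1}$ is the $(2m+1)\times(2m+1)$ matrix with $1$ on the skew-diagonal and $0$ elsewhere; $\mathrm{U}_{2m+1}(\mathbb{F}_q)=\{A\in\mathrm{GL}_{2m+1}(\mathbb{F}_{q^2}):\overline{A}^TQ_{2m+1}A=Q_{2m+1}\}$. Commutators: $[x,y]=x^{-1}y^{-1}xy$, $[X,Y;1]=[X,Y]$, $[X,Y;k]=[[X,Y;k-1],Y]$; $\Omega_1(H)$ is generated by the elements of order $p$ of $H$. For a finite $p$-group $S$, the Oliver subgroup $\mathfrak{X}(S)$ is the unique largest normal subgroup $K$ of $S$ admitting a chain $1=Q_0\leq\cdots\leq Q_k=K$ of normal subgroups of $S$ with $[\Omega_1(C_S(Q_{i-1})),Q_i;p-1]=1$ for all $1\le i\le k$. *)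

(* Defs.v *)
From HB Require Import structures.
From mathcomp Require Import all_boot all_order all_algebra all_fingroup all_solvable all_field.
Set Implicit Arguments. Unset Strict Implicit. Unset Printing Implicit Defensive.
Import GRing.Theory.

Local Open Scope group_scope.

Definition Omega1 (gT : finGroupType) (p : nat) (H : {set gT}) : {set gT} :=
  <<[set x in H | #[x] == p]>>.

Definition comm_iter (gT : finGroupType) (X Y : {set gT}) (k : nat) : {set gT} :=
  iter k (fun Z => [~: Z, Y]) X.

Definition oliver_admissible (gT : finGroupType) (p : nat) (S K : {set gT}) : Prop :=
  exists (k : nat) (Q : nat -> {group gT}),
    [/\ (Q 0 :=: 1)%g, Q k :=: K,
        (forall i, (i < k)%N -> Q i \subset Q i.+1),
        (forall i, (i <= k)%N -> Q i <| S) &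
        (forall i, (1 <= i <= k)%N ->
           (comm_iter (Omega1 p 'C_S(Q i.-1)) (Q i) p.-1 = 1)%g)].

(* K is the Oliver subgroup X(S): the unique largest normal subgroup of S
   admitting such a chain. *)
Definition is_oliver_subgroup (gT : finGroupType) (p : nat) (S K : {set gT}) : Prop :=
  [/\ K <| S, oliver_admissible p S K &
      forall K' : {group gT}, K' <| S -> oliver_admissible p S K' -> K' \subset K].

Local Open Scope ring_scope.

Definition skewQ (F : ringType) (n : nat) : 'M[F]_n :=
  \matrix_(i < n, j < n) ((i + j == n.-1)%N)%:R.

Definition unitary_mx (F : fieldType) (q n : nat) (A : 'M[F]_n) : bool :=
  ((map_mx (fun x => x ^+ q) A)^T *m skewQ F n *m A == skewQ F n).

Definition lower_unitri (F : ringType) (n : nat) (A : 'M[F]_n) : bool :=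
  [forall i : 'I_n, forall j : 'I_n,
     ((i < j)%N ==> (A i j == 0)) && ((i == j) ==> (A i j == 1))].

Definition lower_unitri_unitary (F : finFieldType) (q n : nat) : {set {'GL_n.+1[F]}} :=
  [set g : {'GL_n.+1[F]} | unitary_mx q (GLval g) && lower_unitri (GLval g)].

(* Main.v *)
Require Import Defs.
From mathcomp Require Import all_boot all_order all_algebra all_fingroup all_solvable all_field.
From mathcomp Require Import ring zify.
Set Implicit Arguments. Unset Strict Implicit. Unset Printing Implicit Defensive.
Import GRing.Theory.
Local Open Scope ring_scope.

Section Mx.
Variables (F : finFieldType) (q n : nat).
Hypothesis fD : forall x y : F, (x + y) ^+ q = x ^+ q + y ^+ q.
Hypothesis q_gt0 : (0 < q)%N.

Local Notation fr := (fun x : F => x ^+ q).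
Local Notation conj A := (map_mx fr A).
Local Notation l := (@ord_max n).
Local Notation o := (@ord0 n).
Local Notation P := (delta_mx l l : 'M[F]_n.+1).
Local Notation R := (delta_mx o o : 'M[F]_n.+1).

Lemma fr0 : (0 : F) ^+ q = 0. Proof. by rewrite expr0n eqn0Ngt q_gt0. Qed.

Lemma fr_sum (I : finType) (G : I -> F) : (\sum_i G i) ^+ q = \sum_i (G i) ^+ q.
Proof. exact: (big_morph fr fD fr0). Qed.

Lemma conjM (A B : 'M[F]_n.+1) : conj (A *m B) = conj A *m conj B.
Proof.
apply/matrixP => i j; rewrite !mxE fr_sum; apply: eq_bigr => k _.
by rewrite !mxE exprMn.
Qed.

Lemma conj1 : conj (1%:M : 'M[F]_n.+1) = 1%:M.
Proof. by apply/matrixP => i j; rewrite !mxE; case: (i == j); rewrite ?expr1n ?fr0. Qed.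

Lemma lowP (A : 'M[F]_n.+1) : lower_unitri A ->
  forall i j : 'I_n.+1, ((i < j)%N -> A i j = 0) /\ (i = j -> A i j = 1).
Proof.
move=> /forallP H i j; have /forallP/(_ j)/andP[H1 H2] := H i; split.
  by move=> ij; apply/eqP; rewrite (implyP H1).
by move=> ij; apply/eqP; rewrite (implyP H2) // ij.
Qed.

Lemma lowI (A : 'M[F]_n.+1) :
  (forall i j : 'I_n.+1, ((i < j)%N -> A i j = 0) /\ (i = j -> A i j = 1)) ->
  lower_unitri A.
Proof.
move=> H; apply/forallP => i; apply/forallP => j; have [H1 H2] := H i j.
apply/andP; split; apply/implyP => h; apply/eqP; [exact: H1|exact: H2 (eqP h)].
Qed.

Lemma low1 : lower_unitri (1%:M : 'M[F]_n.+1).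
Proof.
apply: lowI => i j; split; rewrite mxE; last by move->; rewrite eqxx.
move=> ij; have /negPf-> : i != j by rewrite -val_eqE /= neq_ltn ij.
by [].
Qed.

Lemma lowM (A B : 'M[F]_n.+1) : lower_unitri A -> lower_unitri B -> lower_unitri (A *m B).
Proof.
move=> /lowP hA /lowP hB; apply: lowI => i j; split; rewrite mxE.
  move=> ij; apply: big1 => k _.
  have [ik|ki] := ltnP i k; first by rewrite (proj1 (hA i k) ik) mul0r.
  by rewrite (proj1 (hB k j) (leq_ltn_trans ki ij)) mulr0.
move=> ij; subst j; rewrite (bigD1 i) //= big1 ?addr0.
  by rewrite (proj2 (hA i i) erefl) (proj2 (hB i i) erefl) mulr1.
move=> k ki; have [ik|] := ltnP i k; first by rewrite (proj1 (hA i k) ik) mul0r.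
rewrite leq_eqVlt => /orP[/eqP/val_inj kiE|ki']; first by rewrite kiE eqxx in ki.
by rewrite (proj1 (hB k i) ki') mulr0.
Qed.

Lemma lowP_mx (A : 'M[F]_n.+1) : lower_unitri A -> A *m P = P /\ R *m A = R.
Proof.
move=> /lowP h; split; apply/matrixP => i j; rewrite !mxE.
  rewrite (bigD1 l) //= big1 ?addr0; last first.
    by move=> k /negPf kl; rewrite mxE kl /= mulr0.
  rewrite mxE eqxx /=.
  have [il|il] := eqVneq i l; first by rewrite il (proj2 (h l l) erefl) mul1r.
  have il' : (i < l)%N by rewrite ltn_neqAle leq_ord andbT; apply: contra il => /eqP e; apply/eqP/val_inj.
  by rewrite (proj1 (h i l) il') mul0r.
rewrite (bigD1 o) //= big1 ?addr0; last first.
  by move=> k /negPf ko; rewrite mxE ko andbF mul0r.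
rewrite ?mxE ?eqxx ?andbT.
have [jo|jo] := eqVneq j o; first by rewrite jo (proj2 (h o o) erefl) mulr1 ?andbT.
have jpos : (0 < j)%N by rewrite lt0n; apply: contra jo => /eqP e; apply/eqP/val_inj.
by rewrite (proj1 (h o j) jpos) mulr0 andbF.
Qed.

Lemma low_unit (A : 'M[F]_n.+1) : lower_unitri A -> A \in unitmx.
Proof.
move=> /lowP h; rewrite unitmxE det_trig.
  by rewrite big1 ?unitr1 // => i _; rewrite (proj2 (h i i) erefl).
by apply/forallP => i; apply/forallP => j; apply/implyP => ij; rewrite (proj1 (h i j) ij).
Qed.


Local Notation J := (skewQ F n.+1).

Lemma unitaryM (A B : 'M[F]_n.+1) : unitary_mx q A -> unitary_mx q B -> unitary_mx q (A *m B).
Proof.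
rewrite /unitary_mx conjM trmx_mul => /eqP hA /eqP hB.
have -> : (conj B)^T *m (conj A)^T *m J *m (A *m B) =
          (conj B)^T *m ((conj A)^T *m J *m A) *m B by rewrite !mulmxA.
by rewrite hA hB.
Qed.

Lemma unitary1 : unitary_mx q (1%:M : 'M[F]_n.+1).
Proof. by rewrite /unitary_mx conj1 trmx1 mul1mx mulmx1. Qed.

Definition S := lower_unitri_unitary F q n.

Lemma S_gs : group_set S.
Proof.
apply/group_setP; split.
  by rewrite inE GL_1E unitary1 low1.
move=> x y; rewrite !inE => /andP[ux lx] /andP[uy ly].
by rewrite GL_MxE unitaryM // lowM.
Qed.

Canonical S_group := Group S_gs.

Lemma S_low (x : {'GL_n.+1[F]}) : x \in S -> lower_unitri (GLval x).
Proof. by rewrite inE => /andP[]. Qed.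

Lemma Hdecomp (N : 'M[F]_n.+1) : (1 - P) *m N *m (1 - R) = 0 ->
  N = P *m N + N *m R - P *m N *m R.
Proof.
rewrite !mulmxBl !mulmxBr !mul1mx !mulmx1 => /eqP; rewrite subr_eq0 => /eqP h.
have e : N = (N - N *m R) + N *m R by rewrite subrK.
by rewrite {1}e h addrAC.
Qed.


Definition Hcond (N : 'M[F]_n.+1) := (1 - P) *m N *m (1 - R) = 0.

Lemma strictP (M : 'M[F]_n.+1) : lower_unitri M -> (M - 1) *m P = 0 /\ R *m (M - 1) = 0.
Proof.
move=> /lowP_mx[h1 h2]; split; first by rewrite mulmxBl h1 mul1mx subrr.
by rewrite mulmxBr h2 mulmx1 subrr.
Qed.

Lemma prod_corner (N N' : 'M[F]_n.+1) : N *m P = 0 -> R *m N' = 0 ->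
  Hcond N -> Hcond N' -> N *m N' = P *m (N *m N') *m R.
Proof.
move=> NP RN' /Hdecomp eN /Hdecomp eN'.
have e1 : N *m N' = P *m (N *m N').
  rewrite {1}eN mulmxBl mulmxDl -!mulmxA RN' !mulmx0 addr0 subr0.
  by [].
have e2 : N *m N' = N *m N' *m R.
  by rewrite {1}eN' mulmxBr mulmxDr !mulmxA NP !mul0mx add0r subr0.
by rewrite {1}e1 {1}e2 mulmxA.
Qed.


Lemma corner_central (M C : 'M[F]_n.+1) : lower_unitri M ->
  M *m (P *m C *m R) = P *m C *m R /\ (P *m C *m R) *m M = P *m C *m R.
Proof.
move=> /lowP_mx[h1 h2]; split; first by rewrite !mulmxA h1.
by rewrite -mulmxA h2.
Qed.

Lemma comm_mx (N N' : 'M[F]_n.+1) :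
  (1 + N) *m (1 + N') = (1 + N') *m (1 + N) + (N *m N' - N' *m N).
Proof.
rewrite !mulmxDl !mulmxDr !mul1mx !mulmx1.
by apply/matrixP=> i j; rewrite !mxE; ring.
Qed.

Definition Hs : {set {'GL_n.+1[F]}} :=
  [set g : {'GL_n.+1[F]} | (1 - P) *m ((GLval g : 'M[F]_n.+1) - 1) *m (1 - R) == 0].

Definition Aset := S :&: Hs.

Lemma inA (g : {'GL_n.+1[F]}) : (g \in Aset) = (g \in S) && ((1 - P) *m ((GLval g : 'M[F]_n.+1) - 1) *m (1 - R) == 0).
Proof. by rewrite inE [g \in Hs]inE. Qed.

Lemma Hcond_add (X Y : 'M[F]_n.+1) : Hcond X -> Hcond Y -> Hcond (X + Y).
Proof. by rewrite /Hcond => hX hY; rewrite (mulmxDr (1 - P) X Y) mulmxDl hX hY addr0. Qed.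

Lemma Hcond_corner (C : 'M[F]_n.+1) : Hcond (P *m C *m R).
Proof.
have PP : (1 - P) *m P = 0 by rewrite mulmxBl mul1mx mul_delta_mx subrr.
by rewrite /Hcond !mulmxA PP !mul0mx.
Qed.

Lemma Hcond_sub (M : 'M[F]_n.+1) : lower_unitri M -> Hcond (M - 1) ->
  forall M' : 'M[F]_n.+1, lower_unitri M' -> Hcond (M' - 1) ->
  Hcond (M *m M' - 1).
Proof.
move=> lM hM M' lM' hM'.
have [NP _] := strictP lM; have [_ RN'] := strictP lM'.
have e := prod_corner NP RN' hM hM'.
have -> : M *m M' - 1 = (M - 1) + (M' - 1) + (M - 1) *m (M' - 1).
  rewrite mulmxBl mulmxBr !mulmx1 mul1mx.
  by apply/matrixP=> i j; rewrite !mxE; ring.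
rewrite e; apply: Hcond_add; first exact: Hcond_add.
exact: Hcond_corner.
Qed.

Lemma A_gs : group_set Aset.
Proof.
apply/group_setP; split.
  by rewrite inA group1 GL_1E subrr mulmx0 mul0mx eqxx.
move=> x y; rewrite !inA => /andP[xS /eqP hx] /andP[yS /eqP hy].
rewrite (@groupM _ S_group) //=; apply/eqP.
exact: (Hcond_sub (S_low xS) hx (S_low yS) hy).
Qed.

Canonical A_group := Group A_gs.


Lemma corner_cent (x : {'GL_n.+1[F]}) (C : 'M[F]_n.+1) :
  (GLval x : 'M[F]_n.+1) = 1 + P *m C *m R -> x \in 'C(S)%g.
Proof.
move=> hx; apply/centP => y yS; apply: val_inj.
change (GLval x *m GLval y = GLval y *m GLval x).
have [h1 h2] := corner_central C (S_low yS).
by rewrite hx mulmxDl mulmxDr mul1mx mulmx1 h1 h2.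
Qed.

Lemma HcondJ (X' X N : 'M[F]_n.+1) : lower_unitri X' -> lower_unitri X ->
  Hcond N -> Hcond (X' *m N *m X).
Proof.
move=> /lowP_mx[hX'1 _] /lowP_mx[_ hX2] hN.
have e1 : (1 - P) *m X' = (1 - P) *m X' *m (1 - P).
  have PP : (1 - P) *m P = 0 by rewrite mulmxBl mul1mx mul_delta_mx subrr.
  by rewrite (mulmxBr _ 1 P) mulmx1 -mulmxA hX'1 PP subr0.
have e2 : X *m (1 - R) = (1 - R) *m X *m (1 - R).
  have RR : R *m (1 - R) = 0 by rewrite mulmxBr mulmx1 mul_delta_mx subrr.
  by rewrite (mulmxBl 1 R X) mul1mx hX2 mulmxBl RR subr0.
rewrite /Hcond.
have -> : (1 - P) *m (X' *m N *m X) *m (1 - R) = ((1 - P) *m X') *m N *m (X *m (1 - R)).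
  by rewrite !mulmxA.
rewrite e1 e2.
have -> : (1 - P) *m X' *m (1 - P) *m N *m ((1 - R) *m X *m (1 - R)) =
   (1 - P) *m X' *m ((1 - P) *m N *m (1 - R)) *m X *m (1 - R) by rewrite !mulmxA.
by rewrite hN mulmx0 !mul0mx.
Qed.

Lemma A_norm : (Aset <| S)%g.
Proof.
rewrite /normal subsetIl /=; apply/subsetP => x xS; rewrite inE.
apply/subsetP => _ /imsetP[z zA ->].
move: zA; rewrite !inA => /andP[zS /eqP hz].
rewrite (@groupJ _ S_group) //=; apply/eqP.
have xiS : (x^-1)%g \in S by rewrite (@groupV _ S_group).
have -> : (GLval (z ^ x)%g : 'M[F]_n.+1) - 1 = GLval (x^-1)%g *m (GLval z - 1) *m GLval x.
  rewrite mulmxBr mulmx1 mulmxBl.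
  have -> : GLval (x^-1)%g *m GLval x = 1.
    change (GLval (x^-1 * x)%g = 1); by rewrite mulVg.
  rewrite conjgE; change (GLval x^-1%g *m (GLval z *m GLval x) - 1 = GLval x^-1%g *m GLval z *m GLval x - 1).
  by rewrite mulmxA.
exact: HcondJ (S_low xiS) (S_low xS) hz.
Qed.


Lemma GLinvK (y : {'GL_n.+1[F]}) : GLval (y^-1)%g *m GLval y = 1.
Proof. by change (GLval (y^-1 * y)%g = 1); rewrite mulVg. Qed.

Lemma commAA : ([~: Aset, Aset] \subset 'C(S))%g.
Proof.
rewrite gen_subG; apply/subsetP => _ /imset2P[y y' yA y'A ->].
move: yA y'A; rewrite !inA => /andP[yS /eqP hy] /andP[y'S /eqP hy'].
have [NP RN] := strictP (S_low yS); have [NP' RN'] := strictP (S_low y'S).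
have c1 := prod_corner NP RN' hy hy'.
have c2 := prod_corner NP' RN hy' hy.
set Y := (GLval y : 'M[F]_n.+1) in c1 c2 *; set Y' := (GLval y' : 'M[F]_n.+1) in c1 c2 *.
set C := (Y - 1) *m (Y' - 1) - (Y' - 1) *m (Y - 1).
have eK : C = P *m C *m R by rewrite /C (mulmxBr P) (mulmxBl (P *m _)) -c1 -c2.
have lY'Y : lower_unitri (Y' *m Y) := lowM (S_low y'S) (S_low yS).
have [hK1 _] := corner_central C lY'Y.
have eYY : Y *m Y' = Y' *m Y *m (1 + P *m C *m R).
  rewrite mulmxDr mulmx1 hK1 -eK /C !mulmxBl !mulmxBr !mulmx1 !mul1mx.
  by apply/matrixP=> i j; rewrite !mxE; ring.
apply: (corner_cent (C := C)).
change (GLval (y^-1)%g *m (GLval (y'^-1)%g *m (Y *m Y')) = 1 + P *m C *m R).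
by rewrite eYY !mulmxA -(mulmxA (GLval y^-1%g)) GLinvK mulmx1 GLinvK mul1mx.
Qed.


Hypothesis ffK : forall x : F, (x ^+ q) ^+ q = x.
Hypothesis two_nz : (2%:R : F) != 0.
Hypothesis n_gt0 : (0 < n)%N.

Lemma frN (x : F) : (- x) ^+ q = - x ^+ q.
Proof.
apply/eqP; rewrite -subr_eq0 opprK addrC -fD subrr fr0 //.
Qed.

Lemma frb (b : bool) : ((b%:R : F) ^+ q) = b%:R.
Proof. by case: b; rewrite ?expr1n ?fr0. Qed.

Lemma fr_nat (k : nat) : ((k%:R : F) ^+ q) = k%:R.
Proof. by elim: k => [|k IH]; rewrite ?fr0 // -addn1 natrD fD IH expr1n. Qed.

Lemma conjD (A B : 'M[F]_n.+1) : conj (A + B) = conj A + conj B.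
Proof. by apply/matrixP => i j; rewrite !mxE fD. Qed.

Lemma conjZd (x : F) (i j : 'I_n.+1) : conj (x *: delta_mx i j) = x ^+ q *: delta_mx i j.
Proof. by apply/matrixP => a b; rewrite !mxE exprMn frb. Qed.

Lemma JdeltaE (i j : 'I_n.+1) : J *m delta_mx i j = delta_mx (rev_ord i) j.
Proof.
apply/matrixP => a b; rewrite /skewQ !mxE (bigD1 i) //= big1 ?addr0; last first.
  by move=> k /negPf ki; rewrite !mxE ki /= mulr0.
rewrite !mxE eqxx /= -natrM mulnb; congr (_%:R); congr (_ && _).
rewrite -val_eqE /= subSS; have := ltn_ord i; have := ltn_ord a.
by move=> *; apply/eqP/eqP; lia.
Qed.

Lemma deltaJE (i j : 'I_n.+1) : delta_mx i j *m J = delta_mx i (rev_ord j).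
Proof.
apply/matrixP => a b; rewrite /skewQ !mxE (bigD1 j) //= big1 ?addr0; last first.
  by move=> k /negPf kj; rewrite !mxE kj andbF mul0r.
rewrite !mxE eqxx andbT -natrM mulnb; congr (_%:R); congr (_ && _).
rewrite -val_eqE /= subSS; have := ltn_ord j; have := ltn_ord b.
by move=> *; apply/eqP/eqP; lia.
Qed.


Lemma trD (A B : 'M[F]_n.+1) : (A + B)^T = A^T + B^T.
Proof. by apply/matrixP => i j; rewrite !mxE. Qed.
Lemma trZ (x : F) (A : 'M[F]_n.+1) : (x *: A)^T = x *: A^T.
Proof. by apply/matrixP => i j; rewrite !mxE. Qed.

Lemma rev_l : rev_ord l = o. Proof. by apply/val_inj; rewrite /= subnn. Qed.
Lemma rev_o : rev_ord o = l. Proof. by apply/val_inj; rewrite /= subn1. Qed.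

Definition cc (r : 'I_n.+1) (a : F) : F :=
  if r == rev_ord r then - (a ^+ q.+1 / 2%:R) else 0.
Definition Nmx (r : 'I_n.+1) (a : F) : 'M[F]_n.+1 :=
  a *: delta_mx r o + (- a ^+ q) *: delta_mx l (rev_ord r) + cc r a *: delta_mx l o.

Lemma delta_low (x y i j : 'I_n.+1) : (y < x)%N -> (i <= j)%N -> delta_mx x y i j = 0 :> F.
Proof.
move=> yx ij; rewrite mxE; case: eqP => [ix|//]; case: eqP => [jy|]; last by rewrite andbF.
by move: yx ij; rewrite ix jy => yx ij; have := leq_ltn_trans ij yx; rewrite ltnn.
Qed.

Lemma strict_lowI (N : 'M[F]_n.+1) : (forall i j : 'I_n.+1, (i <= j)%N -> N i j = 0) ->
  lower_unitri (1 + N).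
Proof.
move=> h; apply: lowI => i j; rewrite !mxE; split.
  move=> ij; rewrite (h i j (ltnW ij)) addr0.
  by have /negPf-> : i != j by rewrite -val_eqE /= neq_ltn ij.
by move=> ij; rewrite ij eqxx (h j j (leqnn _)) addr0.
Qed.

Lemma mx_delta_E (A : 'M[F]_n.+1) (x y i j : 'I_n.+1) :
  (A *m delta_mx x y) i j = A i x * (j == y)%:R.
Proof.
rewrite mxE (bigD1 x) //= big1 ?addr0; first by rewrite mxE eqxx.
by move=> k /negPf kx; rewrite mxE kx mulr0.
Qed.

Lemma delta_mx_E (A : 'M[F]_n.+1) (x y i j : 'I_n.+1) :
  (delta_mx x y *m A) i j = (i == x)%:R * A y j.
Proof.
rewrite mxE (bigD1 y) //= big1 ?addr0; first by rewrite mxE eqxx andbT.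
by move=> k /negPf ky; rewrite mxE ky andbF mul0r.
Qed.

Lemma addE (A B : 'M[F]_n.+1) i j : (A + B) i j = A i j + B i j.
Proof. by rewrite mxE. Qed.
Lemma scaleE (x : F) (A : 'M[F]_n.+1) i j : (x *: A) i j = x * A i j.
Proof. by rewrite mxE. Qed.

Lemma dlowb (x y i j : 'I_n.+1) : (y < x)%N -> (i <= j)%N -> ((i == x) && (j == y)) = false.
Proof.
move=> yx ij; apply/negbTE/negP => /andP[/eqP ix /eqP jy].
by move: yx ij; rewrite ix jy => yx ij; have := leq_ltn_trans ij yx; rewrite ltnn.
Qed.

Section R.
Variable r : 'I_n.+1.
Hypothesis r0 : (0 < r)%N.
Hypothesis rn : (r < n)%N.

Lemma Nmx_strict a : forall i j : 'I_n.+1, (i <= j)%N -> Nmx r a i j = 0.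
Proof.
move=> i j ij; rewrite !mxE !(dlowb _ ij) ?mulr0 ?addr0 //=.
by rewrite subSS; lia.
Qed.

Lemma r_o : (r == o) = false. Proof. by rewrite -val_eqE /=; lia. Qed.
Lemma o_r : (o == r) = false. Proof. by rewrite -val_eqE /=; lia. Qed.
Lemma r_l : (r == l) = false. Proof. by rewrite -val_eqE /=; lia. Qed.
Lemma l_r : (l == r) = false. Proof. by rewrite -val_eqE /=; lia. Qed.
Lemma s_o : (rev_ord r == o) = false. Proof. by rewrite -val_eqE /= subSS; lia. Qed.
Lemma o_s : (o == rev_ord r) = false. Proof. by rewrite -val_eqE /= subSS; lia. Qed.
Lemma s_l : (rev_ord r == l) = false. Proof. by rewrite -val_eqE /= subSS; lia. Qed.
Lemma l_s : (l == rev_ord r) = false. Proof. by rewrite -val_eqE /= subSS; lia. Qed.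
Lemma l_o : (l == o) = false. Proof. by rewrite -val_eqE /=; lia. Qed.
Lemma o_l : (o == l) = false. Proof. by rewrite -val_eqE /=; lia. Qed.

Lemma Nmx_H a : Hcond (Nmx r a).
Proof.
have hR : forall (x : F) (y : 'I_n.+1), Hcond (x *: delta_mx y o).
  move=> x y; rewrite /Hcond -mulmxA -scalemxAl mulmxBr mulmx1 mul_delta_mx subrr.
  by rewrite scaler0 mulmx0.
have hP : forall (x : F) (y : 'I_n.+1), Hcond (x *: delta_mx l y).
  move=> x y; rewrite /Hcond -scalemxAr mulmxBl mul1mx mul_delta_mx subrr.
  by rewrite scaler0 mul0mx.
by apply: Hcond_add; [apply: Hcond_add|]; [exact: hR|exact: hP|exact: hP].
Qed.

Lemma Nmx_unitary a : unitary_mx q (1 + Nmx r a).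
Proof.
rewrite /unitary_mx /Nmx !conjD conj1 !conjZd !trD trmx1 !trZ !trmx_delta.
rewrite !mulmxDl !mulmxDr !mul1mx !mulmx1 -!scalemxAl -!scalemxAr !deltaJE !JdeltaE.
rewrite !mul_delta_mx_cond !rev_l ?r_o ?o_r ?r_l ?l_r ?s_o ?o_s ?s_l ?l_s ?l_o ?o_l ?mulr0n ?scaler0 ?addr0.
rewrite frN ffK /cc; have [rs|nrs] := eqVneq r (rev_ord r).
  have hc : (- (a ^+ q.+1 / 2)) ^+ q = - (a ^+ q.+1 / 2).
    rewrite frN exprMn exprVn fr_nat exprAC exprS ffK; congr (- (_ / _)).
    by rewrite exprS mulrC.
  rewrite hc mulr1n; apply/eqP/matrixP => i j; rewrite !mxE exprS.
  by move: (a ^+ q) => b; field.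
rewrite fr0 mulr0n !scaler0 !addr0; apply/eqP/matrixP => i j; rewrite !mxE.
by move: (a ^+ q) => b; ring.
Qed.

Definition Ygl a : {'GL_n.+1[F]} :=
  @FinRing.Unit _ (1 + Nmx r a) (low_unit (strict_lowI (Nmx_strict a))).

Lemma Ygl_A a : Ygl a \in Aset.
Proof.
rewrite inA inE; apply/andP; split.
  by apply/andP; split; [exact: Nmx_unitary|exact: strict_lowI (Nmx_strict a)].
apply/eqP; change (Hcond ((1 + Nmx r a) - 1)).
by rewrite (addrC 1) addrK; exact: Nmx_H.
Qed.

Lemma comm_entries (X : 'M[F]_n.+1) a : lower_unitri X ->
  X *m (1 + Nmx r a) = (1 + Nmx r a) *m X ->
  (forall i : 'I_n.+1, i != r -> i != l -> a * X i r = 0) /\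
  (a * X l r = - a ^+ q * X (rev_ord r) o).
Proof.
move=> /lowP hX; rewrite mulmxDr mulmx1 mulmxDl mul1mx => /addrI e.
have eE : forall i : 'I_n.+1, (X *m Nmx r a) i o = (Nmx r a *m X) i o by move=> i; rewrite e.
have X00 : X o o = 1 by rewrite (proj2 (hX o o) erefl).
have Xil : forall i : 'I_n.+1, i != l -> X i l = 0.
  move=> i il; apply: (proj1 (hX i l)).
  by rewrite ltn_neqAle leq_ord andbT -val_eqE in il *.
have XE : forall i, (X *m Nmx r a) i o =
    a * X i r + (- a ^+ q) * (X i l * (o == rev_ord r)%:R) + cc r a * X i l.
  move=> i; rewrite /Nmx !mulmxDr -!scalemxAr !addE !scaleE !mx_delta_E eqxx !mulr1.
  by [].
have NE : forall i, (Nmx r a *m X) i o =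
    a * ((i == r)%:R * X o o) + (- a ^+ q) * ((i == l)%:R * X (rev_ord r) o) + cc r a * ((i == l)%:R * X o o).
  by move=> i; rewrite /Nmx !mulmxDl -!scalemxAl !addE !scaleE !delta_mx_E.
split.
  move=> i ir il; have := eE i; rewrite XE NE (negbTE ir) (negbTE il) o_s Xil //.
  by rewrite !mulr0 !mul0r !mulr0 !addr0.
have := eE l; rewrite XE NE l_r eqxx o_s X00 (proj2 (hX l l) erefl).
rewrite !mulr0 !mul0r !mulr1 !mul1r mulr0 addr0 add0r => /addIr.
by rewrite mulNr.
Qed.

End R.


Hypothesis zeta : exists z : F, z ^+ q != z.

Lemma key_zero (X : 'M[F]_n.+1) (r : 'I_n.+1) (r0 : (0 < r)%N) (rn : (r < n)%N) :
  lower_unitri X -> (forall a, X *m (1 + Nmx r a) = (1 + Nmx r a) *m X) ->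
  X l r = 0 /\ X (rev_ord r) o = 0.
Proof.
move=> lX hc; have [z zq] := zeta.
have [_ e1] := comm_entries r0 rn lX (hc 1).
have [_ e2] := comm_entries r0 rn lX (hc z).
rewrite expr1n mul1r mulN1r in e1.
rewrite e1 mulrN in e2.
have : (z ^+ q - z) * X (rev_ord r) o = 0.
  by rewrite mulrBl -[z * _]opprK e2 mulNr opprK subrr.
move/eqP; rewrite mulf_eq0 subr_eq0 (negbTE zq) /= => /eqP h.
by rewrite e1 h oppr0.
Qed.

Lemma centA : ('C_S(Aset) \subset 'C(S))%g.
Proof.
apply/subsetP => x /setIP[xS /centP xC].
have lX := S_low xS.
set X := (GLval x : 'M[F]_n.+1) in lX *.
have hc : forall (r : 'I_n.+1) (r0 : (0 < r)%N) (rn : (r < n)%N) (a : F),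
    X *m (1 + Nmx r a) = (1 + Nmx r a) *m X.
  move=> r r0 rn a; have := xC _ (Ygl_A r0 rn a) => /(congr1 (@GLval _ _)).
  by [].
apply: (corner_cent (C := X l o *: delta_mx l o)).
rewrite -scalemxAr -scalemxAl mul_delta_mx mul_delta_mx.
apply/matrixP => i j; rewrite addE scaleE !mxE.
have [ij|ji] := leqP i j.
  rewrite (dlowb _ ij) // mulr0 addr0.
  have [eij|nij] := eqVneq i j; first by rewrite eij (proj2 (lowP lX j j) erefl).
  have ij' : (i < j)%N.
    by rewrite ltn_neqAle ij andbT; move: nij; rewrite -val_eqE.
  by rewrite (proj1 (lowP lX i j) ij').
have /negPf-> : i != j by rewrite -val_eqE /= neq_ltn ji orbT.
rewrite add0r.
have [jo|jo] := eqVneq j o.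
  have [il|il] := eqVneq i l; first by rewrite il jo mulr1.
  rewrite mulr0 jo.
  have i0 : (0 < i)%N by rewrite jo in ji.
  have iN : (i < n)%N by rewrite ltn_neqAle -ltnS ltn_ord andbT -val_eqE in il *.
  have r0 : (0 < rev_ord i)%N by rewrite /= subSS; lia.
  have rn : (rev_ord i < n)%N by rewrite /= subSS; lia.
  by have [_] := key_zero r0 rn lX (hc _ r0 rn); rewrite rev_ordK.
rewrite andbF mulr0.
have j0 : (0 < j)%N by rewrite lt0n -val_eqE in jo *.
have jn : (j < n)%N by apply: leq_trans ji _; rewrite -ltnS ltn_ord.
have [il|il] := eqVneq i l.
  by rewrite il; have [] := key_zero j0 jn lX (hc _ j0 jn).
have [h _] := comm_entries j0 jn lX (hc _ j0 jn 1).
rewrite -(mul1r (X i j)); apply: h => //.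
by rewrite -val_eqE /= neq_ltn ji orbT.
Qed.


Lemma iter_sub1 (gT : finGroupType) (X Y : {set gT}) k d :
  (comm_iter X Y k \subset [1])%g -> (comm_iter X Y (k + d) \subset [1])%g.
Proof.
move=> h; elim: d => [|d IH]; first by rewrite addn0.
rewrite addnS /comm_iter iterS; apply: subset_trans (commSg Y IH) _.
by rewrite comm1G.
Qed.

Lemma iter_eq1 (gT : finGroupType) (X Y : {set gT}) j :
  (comm_iter X Y j.+1 \subset [1])%g -> comm_iter X Y j.+1 = 1%g.
Proof. by rewrite /comm_iter iterS => /trivgP. Qed.

Lemma Omega1_sub (gT : finGroupType) (p : nat) (H : {set gT}) (G : {group gT}) :
  H \subset G -> (Omega1 p H \subset G).
Proof.
move=> HG; rewrite /Omega1 gen_subG; apply: subset_trans HG.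
by apply/subsetP => x; rewrite inE => /andP[].
Qed.

Local Open Scope group_scope.
Variable p : nat.
Hypothesis p4 : (4 <= p.-1)%N.

Lemma main_sec : is_oliver_subgroup p S S.
Proof.
split; first exact: (normal_refl S_group).
  exists 2%N, (fun i => if i == 0%N then 1%G else if i == 1%N then A_group else S_group).
  split => //.
  - by case=> [|[|i]] //= _; rewrite ?sub1G ?subsetIl.
  - by case=> [|[|[|i]]] //= _; try exact: normal1; try exact: A_norm; exact: (normal_refl S_group).
  - have [j pj] : exists j, p.-1 = j.+1 by exists p.-2; lia.
    case=> [|[|[|]]] //= _; rewrite pj; apply: iter_eq1; rewrite -pj.
    + have -> : p.-1 = (3 + (p.-1 - 3))%N by lia.
      apply: iter_sub1; rewrite /comm_iter /=.
      have hO : Omega1 p ('C_S(1%G)) \subset S by apply: Omega1_sub; exact: subsetIl.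
      have h1 : ([~: Omega1 p 'C_S(1%G), Aset] \subset Aset)%g.
        rewrite commg_subr gen_subG; apply: subset_trans (normal_norm A_norm).
        by apply/subsetP => x; rewrite !inE => /andP[/andP[]].
      have h2 := subset_trans (commSg Aset h1) commAA.
      apply: subset_trans (commSg Aset h2) _.
      have /commG1P -> : 'C(S) \subset 'C(Aset) by apply: centS; exact: subsetIl.
      by [].
    + have -> : p.-1 = (1 + (p.-1 - 1))%N by lia.
      apply: iter_sub1; rewrite /comm_iter /=.
      have hO : Omega1 p ('C_S(Aset)) \subset 'C(S) by apply: Omega1_sub; exact: centA.
      apply: subset_trans (commSg S hO) _.
      have /commG1P -> : 'C(S) \subset 'C(S) by [].
      by [].
by move=> K' nK' _; exact: normal_sub nK'.
Qed.

End Mx.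

Local Close Scope ring_scope.

Theorem theorem3p9 (p k m : nat) (F : finFieldType) :
  prime p -> (5 <= p)%N -> (0 < k)%N -> (1 <= m)%N ->
  #|F| = ((p ^ k) ^ 2)%N ->
  is_oliver_subgroup p (lower_unitri_unitary F (p ^ k) (2 * m))
                       (lower_unitri_unitary F (p ^ k) (2 * m)).
Proof.
move=> pp p5 k0 m1 cardF.
have hp : p \in [pchar F]%R.
  by apply: (@card_finPcharP F p (k * 2)) => //; rewrite cardF expnM.
have qnat : ([pchar F]%R).-nat (p ^ k)%N.
  by rewrite (eq_pnat _ (pcharf_eq hp)) pnatX pnat_id.
have fD : forall x y : F, ((x + y) ^+ (p ^ k) = x ^+ (p ^ k) + y ^+ (p ^ k))%R.
  by move=> x y; exact: exprDn_pchar.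
have q_gt0 : (0 < p ^ k)%N by rewrite expn_gt0 prime_gt0.
have qq : ((p ^ k) * (p ^ k))%N = #|F| by rewrite cardF mulnn.
have ffK : forall x : F, ((x ^+ (p ^ k)) ^+ (p ^ k) = x)%R.
  by move=> x; rewrite -exprM qq expf_card.
have two_nz : ((2%:R : F) != 0)%R.
  rewrite -(dvdn_pcharf hp); apply/negP => /dvdn_leq h; have := h isT; lia.
have n_gt0 : (0 < 2 * m)%N by lia.
have q5 : (5 <= p ^ k)%N.
  case: k k0 {qnat fD q_gt0 qq ffK cardF} => // k' _; rewrite expnS.
  by apply: leq_trans p5 _; rewrite leq_pmulr // expn_gt0 prime_gt0.
have zeta : exists z : F, (z ^+ (p ^ k) != z)%R.
  case: (pickP (fun z : F => (z ^+ (p ^ k) != z)%R)) => [z hz|h]; first by exists z.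
  exfalso.
  have hall : forall z : F, (z ^+ (p ^ k) = z)%R.
    by move=> z; have := h z => /= /negbFE/eqP.
  have sP : size ('X^(p ^ k) - 'X : {poly F})%R = (p ^ k).+1.
    by rewrite size_polyDl ?size_polyXn // size_polyN size_polyX ltnS; lia.
  have P0 : (('X^(p ^ k) - 'X : {poly F}) != 0)%R by rewrite -size_poly_gt0 sP.
  have ha : all (root ('X^(p ^ k) - 'X)%R) (enum F).
    by apply/allP => z _; rewrite rootE !hornerE hall subrr eqxx.
  have := max_poly_roots P0 ha (enum_uniq _).
  by rewrite -cardE sP -qq; nia.
exact: (main_sec fD q_gt0 ffK two_nz n_gt0 zeta (p := p) ltac:(lia)).
Qed.
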